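(* Assume superclub holds. Then for every collection $\{C_\alpha:\alpha<\omega_2\}$ of club subsets of $\omega_1$ there are pairwise distinct ordinals $\beta_\xi<\omega_2$ ($\xi<\omega_1$) such that $\bigcap_{\xi<\omega_1}C_{\beta_\xi}$ is a club subset of $\omega_1$.
   Context: A superclub sequence is a sequence $\langle A_\delta:\delta\in\lim(\omega_1)\rangle$ such that each $A_\delta$ is a cofinal subset of $\delta$ and for every unbounded $x\subseteq\omega_1$ there is an unbounded $y\subseteq x$ such that $\{\delta<\omega_1: y\cap\delta=A_\delta\}$ is stationary in $\omega_1$. Superclub (at $\aleph_1$) means a superclub sequence exists. *)

(* Defs.v *)
(* omega_1 and omega_2 are represented by arbitrary types carrying
   a well-order characterising them up to isomorphism. *)
From Stdlib Require Import Wellfounded.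

Definition strict_wellorder {T : Type} (lt : T -> T -> Prop) : Prop :=
  well_founded lt /\
  (forall x y z, lt x y -> lt y z -> lt x z) /\
  (forall x y, lt x y \/ x = y \/ lt y x).

Definition countable_sub {T : Type} (P : T -> Prop) : Prop :=
  exists f : T -> nat, forall x y, P x -> P y -> f x = f y -> x = y.

Definition is_omega1 (T : Type) (lt : T -> T -> Prop) : Prop :=
  strict_wellorder lt /\
  (forall x, countable_sub (fun y => lt y x)) /\
  ~ countable_sub (fun _ : T => True).

(* (U, ltU) is (isomorphic to) omega_2, given omega_1 = T: a well-order of
   cardinality > aleph_1 all of whose proper initial segments have size <= aleph_1. *)
Definition is_omega2 (T : Type) (U : Type) (ltU : U -> U -> Prop) : Prop :=
  strict_wellorder ltU /\
  (forall a, exists f : U -> T, forall x y, ltU x a -> ltU y a -> f x = f y -> x = y) /\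
  ~ (exists f : U -> T, forall x y, f x = f y -> x = y).

Section Omega1Notions.
Context {T : Type} (lt : T -> T -> Prop).

Definition le (x y : T) : Prop := lt x y \/ x = y.

Definition is_limit (d : T) : Prop :=
  (exists y, lt y d) /\ (forall y, lt y d -> exists z, lt y z /\ lt z d).

Definition cofinal_in (A : T -> Prop) (d : T) : Prop :=
  (forall a, A a -> lt a d) /\ (forall y, lt y d -> exists a, A a /\ le y a).

Definition unbounded (X : T -> Prop) : Prop :=
  forall a, exists b, X b /\ le a b.

Definition closed (X : T -> Prop) : Prop :=
  forall d, is_limit d ->
    (forall y, lt y d -> exists b, X b /\ le y b /\ lt b d) -> X d.

Definition club (X : T -> Prop) : Prop := closed X /\ unbounded X.

Definition stationary (S : T -> Prop) : Prop :=
  forall C, club C -> exists d, C d /\ S d.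

(* A superclub sequence <A_d : d in lim(omega_1)>; values at non-limits are ignored. *)
Definition superclub_seq (A : T -> T -> Prop) : Prop :=
  (forall d, is_limit d -> cofinal_in (A d) d) /\
  (forall X, unbounded X ->
     exists Y, (forall z, Y z -> X z) /\ unbounded Y /\
       stationary (fun d => is_limit d /\ forall z, (Y z /\ lt z d) <-> A d z)).

Definition superclub : Prop := exists A, superclub_seq A.

End Omega1Notions.

(* Main.v *)
Require Import Defs.
From Stdlib Require Import ClassicalEpsilon Classical Arith Lia Cantor Wellfounded FunctionalExtensionality.

Lemma fchoice {A B : Type} (R : A -> B -> Prop) :
  (forall x, exists y, R x y) -> exists f : A -> B, forall x, R x (f x).
Proof.
  intros H. exists (fun x => proj1_sig (constructive_indefinite_description _ (H x))).
  intros x. exact (proj2_sig (constructive_indefinite_description _ (H x))).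
Qed.

Lemma to_nat_inj p q : Cantor.to_nat p = Cantor.to_nat q -> p = q.
Proof.
  intros H. rewrite <- (cancel_of_to p), <- (cancel_of_to q), H. reflexivity.
Qed.

Section Om1.
Context {T : Type} (lt : T -> T -> Prop).
Hypothesis wf : well_founded lt.
Hypothesis trans : forall x y z, lt x y -> lt y z -> lt x z.
Hypothesis tri : forall x y, lt x y \/ x = y \/ lt y x.
Hypothesis cseg : forall x, countable_sub (fun y => lt y x).
Hypothesis unc : ~ countable_sub (fun _ : T => True).

Lemma irr x : ~ lt x x.
Proof.
  induction (wf x) as [x _ IH]. intros H. exact (IH x H H).
Qed.

Lemma lt_le_false x y : lt x y -> le lt y x -> False.
Proof.
  intros H [H'|H']. - exact (irr x (trans _ _ _ H H')). - subst. exact (irr _ H).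
Qed.

Lemma le_lt_trans x y z : le lt x y -> lt y z -> lt x z.
Proof. intros [H|H] H'. - eauto. - subst; auto. Qed.

Lemma lt_le_trans x y z : lt x y -> le lt y z -> lt x z.
Proof. intros H [H'|H']. - eauto. - subst; auto. Qed.

Lemma le_trans' x y z : le lt x y -> le lt y z -> le lt x z.
Proof. intros [H|H] [H'|H']; subst; unfold le; eauto. Qed.

Lemma not_lt_le x y : ~ lt x y -> le lt y x.
Proof. intros H. destruct (tri x y) as [?|[?|?]]; unfold le; auto. tauto. Qed.

Lemma bounded (P : T -> Prop) : countable_sub P -> exists b, forall x, P x -> lt x b.
Proof.
  intros [f Hf]. apply NNPP. intros Hn.
  assert (Hx : forall b, exists x, P x /\ le lt b x).
  { intros b. apply NNPP. intros H2. apply Hn. exists b. intros x Px.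
    apply NNPP. intros H3. apply H2. exists x. split; auto. apply not_lt_le; auto. }
  destruct (fchoice _ Hx) as [xb Hxb].
  destruct (fchoice (fun x g => forall a b, lt a x -> lt b x -> g a = g b -> a = b) cseg) as [g Hg].
  apply unc.
  exists (fun b => Cantor.to_nat (f (xb b),
     if excluded_middle_informative (b = xb b) then 0 else S (g (xb b) b))).
  intros a b _ _ H. apply to_nat_inj in H. injection H as H1 H2.
  destruct (Hxb a) as [Pa Ha]. destruct (Hxb b) as [Pb Hb].
  assert (E : xb a = xb b) by (apply Hf; auto).
  destruct (excluded_middle_informative (a = xb a)) as [e1|e1];
  destruct (excluded_middle_informative (b = xb b)) as [e2|e2]; try discriminate.
  - congruence.
  - injection H2 as H2. rewrite E in H2.
    destruct Ha as [Ha|Ha]; [|congruence]. destruct Hb as [Hb|Hb]; [|congruence].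
    apply (Hg (xb b)); auto. rewrite <- E; auto.
Qed.

Lemma nomax x : exists y, lt x y.
Proof.
  destruct (bounded (fun y => y = x)) as [b Hb].
  - exists (fun _ => 0). intros; subst; auto.
  - exists b. auto.
Qed.

Lemma minimal (P : T -> Prop) : (exists x, P x) -> exists x, P x /\ forall y, P y -> ~ lt y x.
Proof.
  intros [x Px]. revert Px. induction (wf x) as [x _ IH]. intros Px.
  destruct (classic (exists y, P y /\ lt y x)) as [[y [Py Hy]]|Hn].
  - exact (IH y Hy Py).
  - exists x. split; auto. intros y Py Hy. apply Hn. eauto.
Qed.


Lemma seq_mono (a : nat -> T) : (forall k, lt (a k) (a (S k))) ->
  forall k j, k <= j -> le lt (a k) (a j).
Proof.
  intros Hinc k j Hkj. induction Hkj.
  - right; reflexivity.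
  - left. eapply le_lt_trans; eauto.
Qed.

Lemma seq_lub (a : nat -> T) : (forall k, lt (a k) (a (S k))) ->
  exists g, (forall k, lt (a k) g) /\ (forall y, lt y g -> exists k, le lt y (a k)).
Proof.
  intros Hinc.
  assert (Hc : countable_sub (fun z => exists k, a k = z)).
  { destruct (fchoice (fun z k => (exists k', a k' = z) -> a k = z)) as [f Hf].
    { intros z. destruct (classic (exists k', a k' = z)) as [[k Hk]|Hn].
      - exists k. auto. - exists 0. tauto. }
    exists f. intros x y Hx Hy E. rewrite <- (Hf x Hx), <- (Hf y Hy), E. reflexivity. }
  destruct (bounded _ Hc) as [b Hb].
  destruct (minimal (fun g => forall k, lt (a k) g)) as [g [Hg Hmin]].
  { exists b. intros k. apply Hb. eauto. }
  exists g. split; auto. intros y Hy.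
  apply NNPP. intros Hn. apply (Hmin y); auto. intros k.
  apply NNPP. intros H2. apply Hn. exists k. apply not_lt_le. auto.
Qed.

Lemma nat_clubs (D : nat -> T -> Prop) : (forall n, club lt (D n)) ->
  forall x0, exists g, lt x0 g /\ forall n, D n g.
Proof.
  intros HD x0.
  assert (Hst : forall p : nat * T, exists b, lt (snd p) b /\ D (fst p) b).
  { intros [n x]. simpl. destruct (nomax x) as [y Hy].
    destruct (HD n) as [_ Hu]. destruct (Hu y) as [b [Db Hb]].
    exists b. split; auto. eapply lt_le_trans; eauto. }
  destruct (fchoice _ Hst) as [st Hst'].
  set (a := fix a k := match k with 0 => x0 | S k => st (fst (Cantor.of_nat k), a k) end).
  assert (Hinc : forall k, lt (a k) (a (S k))).
  { intros k. exact (proj1 (Hst' (fst (Cantor.of_nat k), a k))). }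
  assert (HinD : forall k, D (fst (Cantor.of_nat k)) (a (S k))).
  { intros k. exact (proj2 (Hst' (fst (Cantor.of_nat k), a k))). }
  destruct (seq_lub a Hinc) as [g [Hg1 Hg2]].
  exists g. split. { exact (Hg1 0). }
  intros n. destruct (HD n) as [Hcl _]. apply Hcl.
  - split. { exists (a 0). auto. }
    intros y Hy. destruct (Hg2 y Hy) as [k Hk]. exists (a (S k)). split; auto.
    eapply le_lt_trans; eauto.
  - intros y Hy. destruct (Hg2 y Hy) as [k Hk].
    set (j := Cantor.to_nat (n, k)).
    assert (Hj : Cantor.of_nat j = (n, k)) by apply cancel_of_to.
    assert (Hkj : k <= j) by (pose proof (to_nat_non_decreasing n k); unfold j; lia).
    exists (a (S j)). split; [|split].
    + pose proof (HinD j) as H. rewrite Hj in H. exact H.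
    + left. apply (le_lt_trans _ (a k)); auto. apply (le_lt_trans _ (a j)); auto. apply seq_mono; auto.
    + auto.
Qed.

Lemma count_clubs (I : T -> Prop) (K : T -> T -> Prop) :
  countable_sub I -> (forall m, I m -> club lt (K m)) ->
  club lt (fun z => forall m, I m -> K m z).
Proof.
  intros [c Hc] HK. split.
  - intros d Hd H m Im. destruct (HK m Im) as [Hcl _]. apply Hcl; auto.
    intros y Hy. destruct (H y Hy) as [b [Hb1 Hb2]]. exists b; auto.
  - intros a.
    set (D := fun n z => forall m, I m -> c m = n -> K m z).
    assert (HD : forall n, club lt (D n)).
    { intros n. split.
      - intros d Hd H m Im Em. destruct (HK m Im) as [Hcl _]. apply Hcl; auto.
        intros y Hy. destruct (H y Hy) as [b [Hb1 Hb2]]. exists b; split; auto.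
      - intros x. destruct (classic (exists m, I m /\ c m = n)) as [[m0 [I0 E0]]|Hn].
        + destruct (HK m0 I0) as [_ Hu]. destruct (Hu x) as [b [Kb Hb]].
          exists b. split; auto. intros m Im Em.
          assert (m = m0) by (apply Hc; congruence). subst; auto.
        + exists x. split; [|right; reflexivity]. intros m Im Em. exfalso; eauto. }
    destruct (nat_clubs D HD a) as [g [Hg1 Hg2]].
    exists g. split; [|left; auto]. intros m Im. exact (Hg2 (c m) m Im eq_refl).
Qed.

Lemma stat_tail (S X : T -> Prop) : stationary lt S -> club lt X ->
  forall a, exists d, S d /\ X d /\ lt a d.
Proof.
  intros HS [Xcl Xu] a.
  destruct (HS (fun z => lt a z /\ X z)) as [d [[H1 H2] H3]].
  - split.
    + intros d Hd H. split.
      * destruct Hd as [[y0 Hy0] _]. destruct (H y0 Hy0) as [b [[Hb _] [_ Hbd]]]. eauto.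
      * apply Xcl; auto. intros y Hy. destruct (H y Hy) as [b [[_ Hb] ?]]. eauto.
    + intros b. destruct (nomax a) as [s Hs].
      destruct (tri b s) as [Hbs|Hbs].
      * destruct (Xu s) as [x [Xx Hx]]. exists x. split; [split|]; auto.
        eapply lt_le_trans; eauto. left; eapply lt_le_trans; eauto.
      * destruct (Xu b) as [x [Xx Hx]]. exists x. split; [split|]; auto.
        eapply lt_le_trans; [|exact Hx]. destruct Hbs as [E|E]; [subst|]; eauto.
  - exists d. auto.
Qed.


Lemma trec {X : Type} (x0 : X) (P : T -> (T -> X) -> X -> Prop) :
  (forall v h h' x, (forall m, lt m v -> h m = h' m) -> P v h x -> P v h' x) ->
  (forall v h, exists x, P v h x) -> exists g : T -> X, forall v, P v g (g v).
Proof.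
  intros Hloc Hex.
  destruct (fchoice (fun (p : T * (T -> X)) x => P (fst p) (snd p) x)) as [sel Hsel].
  { intros [v h]. apply Hex. }
  set (ext := fun v (rec : forall m, lt m v -> X) (m : T) =>
     match excluded_middle_informative (lt m v) with left p => rec m p | right _ => x0 end).
  set (F := fun v (rec : forall m, lt m v -> X) => sel (v, ext v rec)).
  set (g := Fix wf (fun _ => X) F).
  assert (Hg : forall v, g v = F v (fun m _ => g m)).
  { intros v. unfold g. rewrite (Fix_eq wf (fun _ => X) F). reflexivity.
    intros x f1 f2 E. unfold F. f_equal. f_equal.
    unfold ext. apply functional_extensionality. intros m.
    destruct (excluded_middle_informative (lt m x)); auto. }
  exists g. intros v. rewrite Hg. unfold F.
  apply (Hloc v (ext v (fun m _ => g m))).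
  - intros m Hm. unfold ext. destruct (excluded_middle_informative (lt m v)); tauto.
  - exact (Hsel (v, ext v (fun m _ => g m))).
Qed.

Lemma T_inh : exists t : T, True.
Proof.
  apply NNPP. intros H. apply unc. exists (fun _ => 0). intros x. exfalso. eauto.
Qed.

Lemma iter_props (s : T -> T) : (forall x, lt x (s x)) ->
  (forall n x, le lt x (Nat.iter n s x)) /\
  (forall n m x, n < m -> lt (Nat.iter n s x) (Nat.iter m s x)).
Proof.
  intros Hs. assert (H1 : forall n x, le lt x (Nat.iter n s x)).
  { induction n; intros x; simpl. - right; reflexivity.
    - left. eapply le_lt_trans; eauto. }
  split; auto.
  intros n m x Hnm. induction Hnm; simpl.
  - auto.
  - eapply trans; eauto.
Qed.

Lemma Tnat_inj : exists e : T * nat -> T, forall p q, e p = e q -> p = q.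
Proof.
  destruct (constructive_indefinite_description _ T_inh) as [t0 _].
  destruct (fchoice _ nomax) as [s Hs].
  destruct (iter_props s Hs) as [I1 I2].
  destruct (trec t0 (fun v h x => forall m, lt m v -> forall n, lt (Nat.iter n s (h m)) x))
    as [f Hf].
  - intros v h h' x E H m Hm n. rewrite <- E; auto.
  - intros v h.
    destruct (cseg v) as [c Hc].
    set (Q := fun z => exists m n, lt m v /\ z = Nat.iter n s (h m)).
    destruct (fchoice (fun z (p : T * nat) => Q z -> lt (fst p) v /\ z = Nat.iter (snd p) s (h (fst p))))
      as [ch Hch].
    { intros z. destruct (classic (Q z)) as [[m [n [Hm Hz]]]|Hn].
      - exists (m, n). auto.
      - exists (t0, 0). tauto. }
    destruct (bounded Q) as [b Hb].
    + exists (fun z => Cantor.to_nat (c (fst (ch z)), snd (ch z))).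
      intros x y Qx Qy E. apply to_nat_inj in E. injection E as E1 E2.
      destruct (Hch x Qx) as [Hx1 Hx2]. destruct (Hch y Qy) as [Hy1 Hy2].
      assert (fst (ch x) = fst (ch y)) by (apply Hc; auto).
      rewrite Hx2, Hy2. congruence.
    + exists b. intros m Hm n. apply Hb. exists m, n. auto.
  - exists (fun p => Nat.iter (snd p) s (f (fst p))).
    intros [d n] [d' n'] E. simpl in E.
    destruct (tri d d') as [H|[H|H]].
    + exfalso. pose proof (Hf d' d H n) as H1. eapply lt_le_false; [exact H1|].
      rewrite E. apply I1.
    + subst. f_equal. destruct (Nat.lt_trichotomy n n') as [H|[H|H]]; auto.
      * exfalso. pose proof (I2 _ _ (f d') H). rewrite E in H0. exact (irr _ H0).
      * exfalso. pose proof (I2 _ _ (f d') H). rewrite E in H0. exact (irr _ H0).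
    + exfalso. pose proof (Hf d d' H n') as H1. eapply lt_le_false; [exact H1|].
      rewrite <- E. apply I1.
Qed.

Lemma main_core (U : Type) (noinj : ~ (exists f : U -> T, forall x y, f x = f y -> x = y))
  (A : T -> T -> Prop) (HA1 : forall d, is_limit lt d -> cofinal_in lt (A d) d)
  (HA2 : forall X, unbounded lt X ->
     exists Y, (forall z, Y z -> X z) /\ unbounded lt Y /\
       stationary lt (fun d => is_limit lt d /\ forall z, (Y z /\ lt z d) <-> A d z))
  (C : U -> T -> Prop) (HC : forall a, club lt (C a)) :
  exists beta : T -> U, (forall xi eta, beta xi = beta eta -> xi = eta) /\
    club lt (fun z => forall xi, C (beta xi) z).
Proof.
  set (N := fun d al => forall z, A d z -> C al z).
  assert (Hstar : exists al, forall d, N d al -> ~ countable_sub (N d)).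
  { apply NNPP. intros Hn.
    assert (Hall : forall al, exists d, N d al /\ countable_sub (N d)).
    { intros al. apply NNPP. intros H2. apply Hn. exists al. intros d Nd Hc. apply H2. eauto. }
    destruct (fchoice _ Hall) as [F HF].
    destruct (fchoice (fun d (g : U -> nat) => countable_sub (N d) ->
        forall x y, N d x -> N d y -> g x = g y -> x = y)) as [gg Hgg].
    { intros d. destruct (classic (countable_sub (N d))) as [[g Hg]|Hn2].
      - exists g. auto. - exists (fun _ => 0). tauto. }
    destruct Tnat_inj as [e He].
    apply noinj. exists (fun al => e (F al, gg (F al) al)).
    intros x y E. apply He in E. injection E as E1 E2.
    destruct (HF x) as [Nx Cx]. destruct (HF y) as [Ny Cy].
    rewrite <- E1 in E2, Ny. apply (Hgg (F x)); auto. }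
  destruct Hstar as [ast Hast].
  destruct (HA2 (C ast) (proj2 (HC ast))) as [Y [HYs [_ HS]]].
  set (S := fun d => is_limit lt d /\ forall z, (Y z /\ lt z d) <-> A d z).
  fold S in HS.
  assert (HSN : forall d, S d -> ~ countable_sub (N d)).
  { intros d [_ Hd]. apply Hast. intros z Az. apply HYs. apply Hd. auto. }
  destruct (constructive_indefinite_description _ T_inh) as [t0 _].
  destruct (trec (ast, (t0, t0))
    (fun v h (x : U * (T * T)) =>
       S (fst (snd x)) /\ lt v (fst (snd x)) /\ (forall m, lt m v -> C (fst (h m)) (fst (snd x))) /\
       S (snd (snd x)) /\ lt (fst (snd x)) (snd (snd x)) /\
       (forall m, lt m v -> lt (fst (snd (h m))) (snd (snd x))) /\
       N (snd (snd x)) (fst x) /\ (forall m, lt m v -> fst (h m) <> fst x))) as [g Hg].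
  - intros v h h' x E (H1&H2&H3&H4&H5&H6&H7&H8).
    refine (conj H1 (conj H2 (conj _ (conj H4 (conj H5 (conj _ (conj H7 _)))))));
      intros m Hm; rewrite <- E; auto.
  - intros v h.
    destruct (stat_tail S (fun z => forall m, lt m v -> C (fst (h m)) z) HS) with (a := v)
      as [ga [Sga [Ega Hvga]]].
    { apply count_clubs; [apply cseg | intros m _; apply HC]. }
    destruct (cseg v) as [c Hc].
    set (Q := fun z => z = ga \/ exists m, lt m v /\ z = fst (snd (h m))).
    destruct (fchoice (fun z m => (exists m, lt m v /\ z = fst (snd (h m))) ->
                                   lt m v /\ z = fst (snd (h m)))) as [mz Hmz].
    { intros z. destruct (classic (exists m, lt m v /\ z = fst (snd (h m)))) as [[m Hm]|Hn].
      - exists m; auto. - exists t0; tauto. }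
    destruct (bounded Q) as [b0 Hb0].
    { exists (fun z => if excluded_middle_informative (z = ga) then 0 else Nat.succ (c (mz z))).
      intros x y Qx Qy E.
      destruct (excluded_middle_informative (x = ga)), (excluded_middle_informative (y = ga));
        try discriminate; try congruence.
      injection E as E. destruct Qx as [?|Qx]; [contradiction|].
      destruct Qy as [?|Qy]; [contradiction|].
      destruct (Hmz x Qx) as [? Hx]. destruct (Hmz y Qy) as [? Hy]. rewrite Hx, Hy.
      assert (mz x = mz y) by (apply Hc; auto). congruence. }
    destruct (stat_tail S (fun _ => True) HS) with (a := b0) as [de [Sde [_ Hde]]].
    { split. - intros d _ _; exact I. - intros a; exists a; split; [exact I| right; reflexivity]. }
    assert (Hb : exists b, N de b /\ forall m, lt m v -> fst (h m) <> b).
    { apply NNPP. intros Hn. apply (HSN de Sde).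
      destruct (fchoice (fun al m => (exists m, lt m v /\ fst (h m) = al) ->
                                      lt m v /\ fst (h m) = al)) as [ma Hma].
      { intros al. destruct (classic (exists m, lt m v /\ fst (h m) = al)) as [[m Hm]|Hn2].
        - exists m; auto. - exists t0; tauto. }
      assert (Hin : forall al, N de al -> exists m, lt m v /\ fst (h m) = al).
      { intros al Nal. apply NNPP. intros Hn2. apply Hn. exists al. split; auto.
        intros m Hm E. apply Hn2. eauto. }
      exists (fun al => c (ma al)). intros x y Nx Ny E.
      destruct (Hma x (Hin x Nx)) as [Hx1 Hx2]. destruct (Hma y (Hin y Ny)) as [Hy1 Hy2].
      assert (ma x = ma y) by (apply Hc; auto). congruence. }
    destruct Hb as [b [Nb Hb]]. exists (b, (ga, de)). simpl.
    refine (conj Sga (conj Hvga (conj Ega (conj Sde (conj _ (conj _ (conj Nb Hb))))))).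
    + eapply trans; [apply Hb0; left; reflexivity|exact Hde].
    + intros m Hm. eapply trans; [apply Hb0; right; exists m; split; auto|exact Hde].
  - set (beta := fun x => fst (g x)).
    exists beta. split.
    + intros x y E. destruct (tri x y) as [H|[H|H]]; auto; exfalso.
      * destruct (Hg y) as (_&_&_&_&_&_&_&H8). exact (H8 x H E).
      * destruct (Hg x) as (_&_&_&_&_&_&_&H8). exact (H8 y H (eq_sym E)).
    + split.
      * intros d Hd H xi. destruct (HC (beta xi)) as [Hcl _]. apply Hcl; auto.
        intros y Hy. destruct (H y Hy) as [b [Hb1 Hb2]]. eauto.
      * intros a. exists (fst (snd (g a))). destruct (Hg a) as (H1&H2&H3&H4&H5&H6&H7&H8).
        split; [|left; exact H2]. intros xi.
        destruct (tri xi a) as [Hxa|Hxa]; [exact (H3 xi Hxa)|].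
        assert (Hlt : lt (fst (snd (g a))) (snd (snd (g xi)))).
        { destruct Hxa as [E|Hax]; [subst; exact H5|].
          destruct (Hg xi) as (_&_&_&_&_&K6&_&_). exact (K6 a Hax). }
        destruct (Hg xi) as (_&_&_&[_ K4]&_&_&K7&_).
        destruct H1 as [Hlim H1].
        destruct (HC (beta xi)) as [Hcl _]. apply Hcl; auto.
        intros y Hy. destruct (HA1 _ Hlim) as [Hc1 Hc2].
        destruct (Hc2 y Hy) as [z [Az Hyz]]. exists z. split; [|split; auto].
        apply K7. apply K4. destruct (proj2 (H1 z) Az) as [Yz Hz]. split; auto.
        eapply trans; eauto.
Qed.
End Om1.

Theorem mainTheorem10 (T : Type) (lt : T -> T -> Prop) (U : Type) (ltU : U -> U -> Prop) :
  is_omega1 T lt -> is_omega2 T U ltU -> superclub lt ->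
  forall C : U -> T -> Prop, (forall a, club lt (C a)) ->
  exists beta : T -> U, (forall xi eta, beta xi = beta eta -> xi = eta) /\
    club lt (fun z => forall xi, C (beta xi) z).
Proof.
  intros [[wf [tr tri]] [cseg unc]] [_ [_ noinj]] [A [HA1 HA2]] C HC.
  eapply main_core; eauto.
Qed.
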